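(* Suppose $P$ has a positive real eigenvalue different from $1$, and let $\theta$ be the largest positive real eigenvalue of $P$ different from $1$. Let $\mathcal G$ be a finite nonempty collection of allowed words such that some symbol $i\in\Sigma$ occurs in every word of $\mathcal G$. Then $0<\rho(H_{\mathcal G})\le-\ln\theta$.
   Context: Let $\Sigma=\{1,\dots,N\}$, $A$ an irreducible $N\times N$ $0$–$1$ matrix, $\Sigma_A=\{x\in\Sigma^{\mathbb N}:A_{x_nx_{n+1}}=1\ \forall n\}$ with left shift $\sigma$. A word is allowed if it occurs in some element of $\Sigma_A$; $C_u$ is the set of $x\in\Sigma_A$ beginning with $u$. $P$ is a row-stochastic matrix with $P_{ij}>0$ iff $A_{ij}=1$, $\mathbf p$ its stationary vector, $\mu=\mu_P$ the Markov measure $\mu(C_w)=p_{w_1}P_{w_1w_2}\cdots P_{w_{n-1}w_n}$. For a finite collection $\mathcal G$ of allowed words, $H_{\mathcal G}=\bigcup_{w\in\mathcal G}C_w$. For a hole $H$, $\mathcal W_m=\{x:\sigma^ix\notin H,0\le i\le m\}$ and $\rho(H)=-\lim_m\frac1m\ln\mu(\mathcal W_m)$. *)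

(* Defs.v *)
From HB Require Import structures.
From mathcomp Require Import all_boot all_order all_algebra.
From mathcomp Require Import all_classical all_reals all_analysis.
Set Implicit Arguments. Unset Strict Implicit. Unset Printing Implicit Defensive.
Import Order.TTheory GRing.Theory Num.Theory.
Local Open Scope ring_scope.

(* The alphabet Sigma = {1,...,N} is represented by 'I_N with N = n.+1
   (symbols numbered 0..N-1). Matrices are indexed by 'I_N. *)

Section Defs.
Variables (R : realType) (n : nat).
Local Notation N := n.+1.
Local Notation sym := 'I_N.

Definition zero_one_mx (A : 'M[R]_N) : Prop :=
  forall i j, A i j = 0 \/ A i j = 1.

Definition irreducible_mx (A : 'M[R]_N) : Prop :=
  forall i j : sym, exists k : nat, 0 < (A ^+ k) i j.

Definition in_SigmaA (A : 'M[R]_N) (x : nat -> sym) : Prop :=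
  forall k, A (x k) (x k.+1) = 1.

Definition allowed (A : 'M[R]_N) (w : seq sym) : Prop :=
  exists x : nat -> sym, in_SigmaA A x /\
    exists k : nat, forall t : nat, (t < size w)%N -> x (k + t)%N = nth ord0 w t.

Definition row_stochastic (P : 'M[R]_N) : Prop :=
  (forall i j, 0 <= P i j) /\ (forall i, \sum_j P i j = 1).

Definition compatible (A P : 'M[R]_N) : Prop :=
  forall i j, (0 < P i j) <-> (A i j = 1).

Definition stationary (P : 'M[R]_N) (p : 'rV[R]_N) : Prop :=
  (forall i, 0 <= p 0 i) /\ \sum_i p 0 i = 1 /\ p *m P = p.

Fixpoint trans_prod (P : 'M[R]_N) (a : sym) (t : seq sym) : R :=
  match t with
  | [::] => 1
  | b :: t' => P a b * trans_prod P b t'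
  end.

Definition mu_cyl (P : 'M[R]_N) (p : 'rV[R]_N) (w : seq sym) : R :=
  match w with
  | [::] => 1
  | a :: t => p 0 a * trans_prod P a t
  end.

(* y lies in the hole H_G = U_{w in G} C_w iff y begins with some w in G;
   here v is a (long enough) initial segment of y *)
Definition in_hole (G : seq (seq sym)) (v : seq sym) : bool :=
  has (fun w => prefix w v) G.

Definition maxlen (G : seq (seq sym)) : nat := \max_(w <- G) size w.

(* u (an initial segment of x of length m + maxlen G) witnesses
   x in W_m = { x : sigma^i x notin H_G, 0 <= i <= m } *)
Definition survives (G : seq (seq sym)) (m : nat) (u : seq sym) : bool :=
  all (fun i => ~~ in_hole G (drop i u)) (iota 0 m.+1).

(* mu(W_m): W_m is determined by the first m + maxlen G coordinates, so it
   is the disjoint union of the cylinders C_u over the surviving words u of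
   that length; its Markov measure is the sum of their cylinder measures. *)
Definition mu_W (P : 'M[R]_N) (p : 'rV[R]_N) (G : seq (seq sym)) (m : nat) : R :=
  \sum_(u : (m + maxlen G).-tuple sym | survives G m u) mu_cyl P p u.

End Defs.

(* Main.v *)
Require Import Defs.
From HB Require Import structures.
From mathcomp Require Import all_boot all_order all_algebra.
From mathcomp Require Import all_classical all_reals all_analysis.
From mathcomp Require Import lra ring.
Import Order.TTheory GRing.Theory Num.Theory.
Import numFieldNormedType.Exports.
Local Open Scope classical_set_scope.
Local Open Scope ring_scope.
Set Implicit Arguments. Unset Strict Implicit. Unset Printing Implicit Defensive.

Section Seqsum.
Variables (R : realType) (T : finType).

Definition sumseq (k : nat) (F : seq T -> R) : R := \sum_(u : k.-tuple T) F u.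

Lemma sumseq0 F : sumseq 0 F = F [::].
Proof.
rewrite /sumseq (big_pred1 [tuple]) // => u /=.
by apply/esym/eqP/tuple0.
Qed.

Lemma sumseqS k F : sumseq k.+1 F = \sum_(j : T) sumseq k (fun e => F (j :: e)).
Proof.
rewrite /sumseq pair_big /=.
rewrite (reindex (fun p : T * k.-tuple T => cons_tuple p.1 p.2)) /=.
  by apply: eq_bigr => -[j e].
exists (fun u : k.+1.-tuple T => (thead u, behead_tuple u)).
- by case=> j e _ /=; congr pair; try apply/val_inj.
- by move=> u _; apply/val_inj => /=; rewrite [in RHS](tuple_eta u).
Qed.

Lemma sumseq_cat a b F :
  sumseq (a + b) F = sumseq a (fun s => sumseq b (fun e => F (s ++ e))).
Proof.
elim: a F => [|a IH] F; first by rewrite add0n sumseq0.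
rewrite addSn !sumseqS; apply: eq_bigr => j _.
by rewrite IH.
Qed.

Lemma eq_sumseq k F1 F2 : (forall s, size s = k -> F1 s = F2 s) ->
  sumseq k F1 = sumseq k F2.
Proof. by move=> H; apply: eq_bigr => u _; rewrite H // size_tuple. Qed.

Lemma ler_sumseq k F1 F2 : (forall s, size s = k -> F1 s <= F2 s) ->
  sumseq k F1 <= sumseq k F2.
Proof. by move=> H; apply: ler_sum => u _; rewrite H // size_tuple. Qed.

Lemma sumseq_ge0 k F : (forall s, size s = k -> 0 <= F s) -> 0 <= sumseq k F.
Proof. by move=> H; apply: sumr_ge0 => u _; rewrite H // size_tuple. Qed.

Lemma sumseqZ k c F : sumseq k (fun s => c * F s) = c * sumseq k F.
Proof. by rewrite /sumseq mulr_sumr. Qed.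

Lemma sumseq_ge_term k F s : (forall s, size s = k -> 0 <= F s) -> size s = k ->
  F s <= sumseq k F.
Proof.
move=> H Hs.
have Hs' : size s == k by apply/eqP.
rewrite /sumseq (bigD1 (Tuple Hs')) //= lerDl.
by apply: sumr_ge0 => u _; rewrite H // size_tuple.
Qed.

End Seqsum.


Section Gen.
Variables (R : realType) (n : nat).
Local Notation N := n.+1.
Local Notation sym := 'I_N.

Lemma tp_cat (M : 'M[R]_N) a c d :
  trans_prod M a (c ++ d) = trans_prod M a c * trans_prod M (last a c) d.
Proof. by elim: c a => [|b c IH] a /=; rewrite ?mul1r // IH mulrA. Qed.

Lemma tp_rcons (M : 'M[R]_N) a c b :
  trans_prod M a (rcons c b) = trans_prod M a c * M (last a c) b.
Proof. by rewrite -cats1 tp_cat /= mulr1. Qed.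

Lemma tp_ge0 (M : 'M[R]_N) : (forall a b, 0 <= M a b) ->
  forall a c, 0 <= trans_prod M a c.
Proof. by move=> H a c; elim: c a => [|b c IH] a /=; rewrite ?ler01 ?mulr_ge0. Qed.

Lemma pow_ge0 (M : 'M[R]_N) : (forall a b, 0 <= M a b) ->
  forall k a b, 0 <= (M ^+ k) a b.
Proof.
move=> H; elim=> [|k IH] a b.
  by rewrite expr0 mxE ler0n.
rewrite exprSr -mulmxE mxE; apply: sumr_ge0 => c _; exact: mulr_ge0.
Qed.

Lemma sum_pos_term (I : finType) (F : I -> R) : 0 < \sum_i F i -> exists i, 0 < F i.
Proof.
move=> H; apply: contrapT => Hn.
suff : \sum_i F i <= 0 by rewrite leNgt H.
apply: sumr_le0 => i _; rewrite leNgt; apply/negP => Hi; apply: Hn; by exists i.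
Qed.

Lemma term_le_sum (I : finType) (F : I -> R) j : (forall i, 0 <= F i) -> F j <= \sum_i F i.
Proof. by move=> H; rewrite (bigD1 j) //= lerDl sumr_ge0. Qed.

Lemma pos_mul (x y : R) : 0 <= x -> 0 <= y -> 0 < x * y -> 0 < x /\ 0 < y.
Proof.
move=> hx hy hxy; split; rewrite lt_def ?hx ?hy andbT; apply/eqP => h;
  by move: hxy; rewrite h ?mul0r ?mulr0 ltxx.
Qed.

Lemma path_of_pow (M : 'M[R]_N) : (forall a b, 0 <= M a b) ->
  forall k a b, 0 < (M ^+ k) a b ->
  exists c : seq sym, [/\ size c = k, last a c = b & 0 < trans_prod M a c].
Proof.
move=> H; elim=> [|k IH] a b.
  rewrite expr0 mxE; case: eqP => [->|]; last by rewrite ltxx.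
  by exists [::]; rewrite /= ltr01.
rewrite exprSr -mulmxE mxE => /sum_pos_term [c].
move=> /(pos_mul (pow_ge0 H _ _ _) (H _ _)) [h1 h2].
have [c' [s1 l1 t1]] := IH _ _ h1.
exists (rcons c' b); rewrite size_rcons s1 last_rcons tp_rcons l1; split => //.
exact: mulr_gt0.
Qed.

Lemma mul_nonneg m k l (X : 'M[R]_(m, k)) (Y : 'M[R]_(k, l)) :
  (forall a b, 0 <= X a b) -> (forall a b, 0 <= Y a b) -> forall a b, 0 <= (X *m Y) a b.
Proof. by move=> HX HY a b; rewrite mxE; apply: sumr_ge0 => c _; rewrite mulr_ge0. Qed.

Lemma geo0 (q M x : R) : 0 <= q -> q < 1 -> (forall K, x <= M * q ^+ K) -> x <= 0.
Proof.
move=> q0 q1 H; rewrite leNgt; apply/negP => x0.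
have hq : `|q| < 1 by rewrite ger0_norm.
have := cvg_expr hq.
move/cvgrPdist_lt => /(_ (x / (`|M| + 1))).
have e0 : 0 < x / (`|M| + 1) by rewrite divr_gt0 // ltr_wpDl.
move=> /(_ e0) [K _ HK].
have := HK K (leqnn K); rewrite /= sub0r normrN ger0_norm ?exprn_ge0 // => hK.
have := H K.
apply/negP; rewrite -ltNge.
apply: (le_lt_trans (ler_norm _)).
rewrite normrM (ger0_norm (exprn_ge0 _ q0)).
apply: (le_lt_trans (y := (`|M| + 1) * q ^+ K)).
  by rewrite ler_wpM2r ?exprn_ge0 // lerDl.
by rewrite mulrC -ltr_pdivlMr ?ltr_wpDl.
Qed.

End Gen.


Section Main.
Variables (R : realType) (n : nat).
Local Notation N := n.+1.
Local Notation sym := 'I_N.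
Variables (A P : 'M[R]_N) (p : 'rV[R]_N) (G : seq (seq sym)) (i0 : sym).
Hypothesis HA01 : zero_one_mx A.
Hypothesis HAirr : irreducible_mx A.
Hypothesis HP : row_stochastic P.
Hypothesis HAP : compatible A P.
Hypothesis Hp : stationary P p.
Hypothesis HGne : G != [::].
Hypothesis HGall : forall w, w \in G -> allowed A w.
Hypothesis HGsym : forall w, w \in G -> i0 \in w.

Lemma P_ge0 a b : 0 <= P a b. Proof. by case: HP. Qed.
Lemma P_row a : \sum_j P a j = 1. Proof. by case: HP. Qed.
Lemma P_le1 a b : P a b <= 1.
Proof. by rewrite -(P_row a); apply: term_le_sum => j; apply: P_ge0. Qed.
Lemma A_ge0 a b : 0 <= A a b. Proof. by case: (HA01 a b) => ->; rewrite ?ler01. Qed.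
Lemma p_ge0 a : 0 <= p 0 a. Proof. by case: Hp. Qed.

Lemma tpP_ge0 a c : 0 <= trans_prod P a c.
Proof. exact: tp_ge0 P_ge0 a c. Qed.

Lemma tpP_le1 a c : trans_prod P a c <= 1.
Proof.
elim: c a => [|b c IH] a /=; first by [].
by rewrite -(mul1r 1) ler_pM ?P_le1 ?IH ?P_ge0 ?tpP_ge0.
Qed.

Lemma mu_ge0 s : 0 <= mu_cyl P p s.
Proof. by case: s => [|a s] /=; rewrite ?ler01 // mulr_ge0 ?p_ge0 ?tpP_ge0. Qed.

Lemma tpA_tpP a c : 0 < trans_prod A a c -> 0 < trans_prod P a c.
Proof.
elim: c a => [|b c IH] a //=.
move=> /(pos_mul (A_ge0 _ _) (tp_ge0 A_ge0 _ _)) [h1 h2].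
apply: mulr_gt0; last exact: IH.
by apply/HAP; case: (HA01 a b) h1 => // ->; rewrite ltxx.
Qed.

Lemma irr_path a b : exists c, last a c = b /\ 0 < trans_prod P a c.
Proof.
have [k Hk] := HAirr a b.
have [c [_ l1 t1]] := path_of_pow A_ge0 Hk.
by exists c; split => //; apply: tpA_tpP.
Qed.

Lemma succ_exists a : exists j, 0 < P a j.
Proof. by apply: sum_pos_term; rewrite P_row ltr01. Qed.

Lemma p_step a b : p 0 a * P a b <= p 0 b.
Proof.
case: Hp => _ [_ Hs].
rewrite -{2}Hs mxE; apply: (term_le_sum (F := fun x => p 0 x * P x b)) => x.
by rewrite mulr_ge0 ?p_ge0 ?P_ge0.
Qed.

Lemma p_gt0 b : 0 < p 0 b.
Proof.
case: Hp => _ [Hs _].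
have [a Ha] : exists a, 0 < p 0 a by apply: sum_pos_term; rewrite Hs ltr01.
have [c [<- Hc]] := irr_path a b.
elim: c a Ha Hc => [|d c IH] a Ha //= Hc.
have [h1 h2] := pos_mul (P_ge0 _ _) (tpP_ge0 _ _) Hc.
apply: IH h2; apply: (lt_le_trans _ (p_step a d)); exact: mulr_gt0.
Qed.

Local Notation L := (maxlen G).

Lemma size_le_L w : w \in G -> (size w <= L)%N.
Proof. by move=> Hw; rewrite /maxlen; apply: (leq_bigmax_seq (F := size)). Qed.

Lemma L_gt0 : (0 < L)%N.
Proof.
have [w Hw] : exists w, w \in G.
  by move: HGne; case: G => // w G' _; exists w; rewrite inE eqxx.
apply: (leq_trans _ (size_le_L Hw)).
by move: (HGsym Hw); case: (w).
Qed.

Lemma in_hole_cat s t : (L <= size s)%N -> in_hole G (s ++ t) = in_hole G s.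
Proof.
move=> Hs; rewrite /in_hole; apply: eq_in_has => w Hw.
by rewrite !prefixE takel_cat // (leq_trans (size_le_L Hw)).
Qed.

Definition gd (s : seq sym) : R := if in_hole G s then 0 else 1.

Fixpoint Gf (k : nat) (s : seq sym) : R :=
  if k is k'.+1 then
    gd s * \sum_(j : sym) P (last ord0 s) j * Gf k' (rcons (behead s) j)
  else gd s.

Lemma gd_ge0 s : 0 <= gd s. Proof. by rewrite /gd; case: ifP; rewrite ?ler01. Qed.
Lemma gd_le1 s : gd s <= 1. Proof. by rewrite /gd; case: ifP; rewrite ?ler01. Qed.

Lemma Gf_01 k s : 0 <= Gf k s <= 1.
Proof.
elim: k s => [|k IH] s /=; first by rewrite gd_ge0 gd_le1.
have H1 : 0 <= \sum_j P (last ord0 s) j * Gf k (rcons (behead s) j).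
  by apply: sumr_ge0 => j _; rewrite mulr_ge0 ?P_ge0 //; case/andP: (IH (rcons (behead s) j)).
have H2 : \sum_j P (last ord0 s) j * Gf k (rcons (behead s) j) <= 1.
  rewrite -(P_row (last ord0 s)); apply: ler_sum => j _.
  by rewrite ler_piMr ?P_ge0 //; case/andP: (IH (rcons (behead s) j)).
rewrite mulr_ge0 ?gd_ge0 //=.
by rewrite -(mul1r 1) ler_pM ?gd_ge0 ?gd_le1.
Qed.

Lemma Gf_ge0 k s : 0 <= Gf k s. Proof. by case/andP: (Gf_01 k s). Qed.
Lemma Gf_le1 k s : Gf k s <= 1. Proof. by case/andP: (Gf_01 k s). Qed.

Lemma Gf_bad k s : in_hole G s -> Gf k s = 0.
Proof. by move=> H; case: k => [|k] /=; rewrite /gd H ?mul0r. Qed.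

Lemma Gf_mono k s : Gf k.+1 s <= Gf k s.
Proof.
elim: k s => [|k IH] s.
  rewrite /= -{2}(mulr1 (gd s)) ler_wpM2l ?gd_ge0 // -(P_row (last ord0 s)).
  by apply: ler_sum => j _; rewrite ler_piMr ?P_ge0 ?gd_le1.
rewrite [Gf k.+2 s]/= [Gf k.+1 s]/=; rewrite ler_wpM2l ?gd_ge0 //.
by apply: ler_sum => j _; rewrite ler_wpM2l ?P_ge0 ?IH.
Qed.

Lemma Gf_anti k k' s : (k <= k')%N -> Gf k' s <= Gf k s.
Proof.
move=> /subnK <-; elim: (k' - k)%N => [|d IH]; first by rewrite add0n.
by rewrite addSn (le_trans (Gf_mono _ _)).
Qed.

Lemma survivesS m x s t : survives G m.+1 ((x :: s) ++ t) =
  ~~ in_hole G ((x :: s) ++ t) && survives G m (s ++ t).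
Proof.
have E : forall k, iota 0 k.+1 = 0 :: map succn (iota 0 k).
  by move=> k; rewrite /= -[1%N]/(1 + 0)%N iotaDl.
rewrite /survives [iota 0 m.+2]E /= drop0 all_map; congr andb.
Qed.

Lemma mu_cyl_cat s e : s != [::] ->
  mu_cyl P p (s ++ e) = mu_cyl P p s * trans_prod P (last ord0 s) e.
Proof. by case: s => [|a s] //= _; rewrite tp_cat mulrA. Qed.

Lemma Gf_tuple m s : size s = L ->
  Gf m s = sumseq m (fun e => if survives G m (s ++ e)
                              then trans_prod P (last ord0 s) e else 0).
Proof.
elim: m s => [|m IH] s Hs.
  by rewrite sumseq0 /= /survives /= drop0 cats0 /gd; case: (in_hole G s).
rewrite sumseqS.
case: s Hs => [|x s] Hs; first by move: L_gt0; rewrite -Hs.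
case Hh: (in_hole G (x :: s)).
  rewrite /= /gd Hh mul0r; symmetry; apply: big1 => j _; apply: big1 => u _.
  by rewrite survivesS in_hole_cat ?Hs // Hh.
rewrite /= /gd Hh mul1r; apply: eq_bigr => j _.
have Hsz : size (rcons s j) = L by rewrite size_rcons -Hs.
rewrite IH // -sumseqZ; apply: eq_sumseq => e _.
rewrite survivesS in_hole_cat ?Hs // Hh /= last_rcons cat_rcons.
by case: ifP; rewrite ?mulr0.
Qed.

Lemma muW_eq m : mu_W P p G m = sumseq L (fun s => mu_cyl P p s * Gf m s).
Proof.
have -> : mu_W P p G m =
    sumseq (m + L) (fun u => if survives G m u then mu_cyl P p u else 0).
  by rewrite /mu_W big_mkcond.
rewrite addnC sumseq_cat; apply: eq_sumseq => s Hs.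
have Hne : s != [::] by apply/eqP => Hs0; move: L_gt0; rewrite -Hs Hs0.
rewrite Gf_tuple // -sumseqZ; apply: eq_sumseq => e _.
by rewrite mu_cyl_cat //; case: ifP; rewrite ?mulr0.
Qed.

Lemma tp_sum k a : sumseq k (fun e => trans_prod P a e) = 1.
Proof.
elim: k a => [|k IH] a; first by rewrite sumseq0.
rewrite sumseqS -(P_row a); apply: eq_bigr => j _ /=.
by rewrite (sumseqZ _ _ (fun e => trans_prod P j e)) IH mulr1.
Qed.

Lemma mu_sum : sumseq L (fun s => mu_cyl P p s) = 1.
Proof.
have [l ->] : exists l, L = l.+1 by exists L.-1; rewrite prednK // L_gt0.
rewrite sumseqS; case: Hp => _ [<- _]; apply: eq_bigr => j _ /=.
by rewrite (sumseqZ _ _ (fun e => trans_prod P j e)) tp_sum mulr1.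
Qed.

Definition Bm k : R :=
  \big[Num.max/0]_(t : L.-tuple sym | 0 < mu_cyl P p t) Gf k t.

Lemma Bm_ge0 k : 0 <= Bm k. Proof. exact: bigmax_ge_id. Qed.
Lemma Bm_le1 k : Bm k <= 1.
Proof. by apply: bigmax_le; rewrite ?ler01 // => t _; apply: Gf_le1. Qed.

Lemma Gf_le_B k s : size s = L -> 0 < mu_cyl P p s -> Gf k s <= Bm k.
Proof.
move=> Hs Hm; have Hs' : size s == L by apply/eqP.
have -> : s = Tuple Hs' by [].
by apply: le_bigmax_cond.
Qed.

Lemma muW_le_B m : mu_W P p G m <= Bm m.
Proof.
rewrite muW_eq -[Bm m]mulr1 -mu_sum -sumseqZ.
apply: ler_sumseq => s Hs; rewrite [Bm m * _]mulrC.
case: (ltrP 0 (mu_cyl P p s)) => H.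
  by apply: ler_wpM2l; [apply: mu_ge0 | apply: Gf_le_B].
have -> : mu_cyl P p s = 0 by apply/le_anti; rewrite H mu_ge0.
by rewrite !mul0r.
Qed.

Lemma muW_ge_B : exists c : R, 0 < c /\ forall m, c * Bm m <= mu_W P p G m.
Proof.
pose c := \big[Num.min/1]_(t : L.-tuple sym | 0 < mu_cyl P p t) mu_cyl P p t.
have c0 : 0 < c by apply: lt_bigmin; rewrite ?ltr01.
exists c; split => // m.
rewrite -ler_pdivlMl //; apply: bigmax_le.
  by rewrite mulr_ge0 ?invr_ge0 ?(ltW c0) // muW_eq; apply: sumseq_ge0 => s _;
    rewrite mulr_ge0 ?mu_ge0 ?Gf_ge0.
move=> t Ht; rewrite ler_pdivlMl //.
apply: (le_trans (y := mu_cyl P p t * Gf m t)).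
  by rewrite ler_wpM2r ?Gf_ge0 //; by apply: bigmin_le_cond.
rewrite muW_eq; apply: (sumseq_ge_term (F := fun s => mu_cyl P p s * Gf m s)).
  by move=> s _; rewrite mulr_ge0 ?mu_ge0 ?Gf_ge0.
by rewrite size_tuple.
Qed.

Lemma size_shift (s : seq sym) (j : sym) : size s = L -> size (rcons (behead s) j) = L.
Proof. by move=> Hs; rewrite size_rcons size_behead Hs prednK // L_gt0. Qed.

Lemma shift_pos (s : seq sym) (j : sym) : size s = L -> 0 < mu_cyl P p s -> 0 < P (last ord0 s) j ->
  0 < mu_cyl P p (rcons (behead s) j).
Proof.
case: s => [|x [|y t]] Hs //=.
- by move: L_gt0; rewrite -Hs.
- by move=> _ Hj; rewrite mulr1 p_gt0.
move=> /(pos_mul (p_ge0 _) (mulr_ge0 (P_ge0 _ _) (tpP_ge0 _ _))) [_].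
move=> /(pos_mul (P_ge0 _ _) (tpP_ge0 _ _)) [_ Ht] Hj.
by rewrite tp_rcons mulr_gt0 ?p_gt0 // mulr_gt0.
Qed.

Lemma Gf_submult m k s : size s = L -> 0 < mu_cyl P p s ->
  Gf (m.+1 + k)%N s <= Gf m s * Bm k.
Proof.
elim: m s => [|m IH] s Hs Hm.
  rewrite add1n /= ler_wpM2l ?gd_ge0 //.
  rewrite -[Bm k]mul1r -(P_row (last ord0 s)) mulr_suml; apply: ler_sum => j _.
  case: (ltrP 0 (P (last ord0 s) j)) => Hj.
    by rewrite ler_wpM2l ?P_ge0 // Gf_le_B ?size_shift ?shift_pos.
  have -> : P (last ord0 s) j = 0 by apply/le_anti; rewrite Hj P_ge0.
  by rewrite !mul0r.
rewrite addSn [Gf _.+1 s]/= [Gf m.+1 s]/= -mulrA ler_wpM2l ?gd_ge0 //.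
rewrite mulr_suml; apply: ler_sum => j _; rewrite -mulrA.
case: (ltrP 0 (P (last ord0 s) j)) => Hj.
  by rewrite ler_wpM2l ?P_ge0 // IH ?size_shift ?shift_pos.
have -> : P (last ord0 s) j = 0 by apply/le_anti; rewrite Hj P_ge0.
by rewrite !mul0r.
Qed.

Lemma Bm_submult m k : Bm (m.+1 + k)%N <= Bm m * Bm k.
Proof.
apply: bigmax_le; first by rewrite mulr_ge0 ?Bm_ge0.
move=> t Ht; apply: (le_trans (Gf_submult _ _ _ Ht)); first by rewrite size_tuple.
by rewrite ler_wpM2r ?Bm_ge0 // Gf_le_B // size_tuple.
Qed.

Definition Qm : 'M[R]_N := \matrix_(a, b) if (a != i0) && (b != i0) then P a b else 0.
Definition one : 'cV[R]_N := const_mx 1.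

Lemma Qm_ge0 a b : 0 <= Qm a b.
Proof. by rewrite mxE; case: ifP => _; rewrite ?P_ge0. Qed.

Lemma Qm_le_P a b : Qm a b <= P a b.
Proof. by rewrite mxE; case: ifP => _; rewrite ?P_ge0. Qed.

Lemma Qrow k a : 0 <= ((Qm ^+ k) *m one) a 0 <= 1.
Proof.
elim: k a => [|k IH] a.
  by rewrite expr0 mul1mx mxE ler01 lexx.
rewrite exprS -mulmxE -mulmxA mxE; apply/andP; split.
  by apply: sumr_ge0 => j _; rewrite mulr_ge0 ?Qm_ge0 //; case/andP: (IH j).
rewrite -(P_row a); apply: ler_sum => j _.
apply: (le_trans (y := Qm a j)); last exact: Qm_le_P.
by rewrite ler_piMr ?Qm_ge0 //; case/andP: (IH j).
Qed.

Lemma Qpow_le_row k a b : (Qm ^+ k) a b <= ((Qm ^+ k) *m one) a 0.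
Proof.
rewrite mxE; apply: (le_trans _ (term_le_sum (F := fun j => (Qm ^+ k) a j * one j 0) b _)).
  by rewrite mxE mulr1.
by move=> j; rewrite mxE mulr1 (pow_ge0 Qm_ge0).
Qed.

Lemma Qpow_le1 k a b : (Qm ^+ k) a b <= 1.
Proof. by apply: (le_trans (Qpow_le_row k a b)); case/andP: (Qrow k a). Qed.

Lemma nohole (s : seq sym) : i0 \notin s -> ~~ in_hole G s.
Proof.
move=> Hi; apply/hasPn => w Hw; apply/negP; rewrite prefixE => /eqP Hpre.
by move: (HGsym Hw); rewrite -Hpre => /mem_take; apply/negP.
Qed.

Lemma last_notin (s : seq sym) : s != [::] -> i0 \notin s -> last ord0 s != i0.
Proof.
case: s => [|x s] // _ Hi; apply/eqP => He; move: Hi.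
by rewrite -He /= mem_last.
Qed.

Lemma Gf_ge_Q m s : size s = L -> i0 \notin s ->
  ((Qm ^+ m) *m one) (last ord0 s) 0 <= Gf m s.
Proof.
elim: m s => [|m IH] s Hs Hi.
  by rewrite expr0 mul1mx mxE /= /gd (negbTE (nohole Hi)).
have Hne : s != [::] by apply/eqP => Hs0; move: L_gt0; rewrite -Hs Hs0.
rewrite exprS -mulmxE -mulmxA mxE /= /gd (negbTE (nohole Hi)) mul1r.
apply: ler_sum => j _; rewrite [Qm _ j]mxE (last_notin Hne Hi) /=.
case: (eqVneq j i0) => [->|Hj] /=.
  by rewrite mul0r mulr_ge0 ?P_ge0 ?Gf_ge0.
rewrite ler_wpM2l ?P_ge0 //; have := IH (rcons (behead s) j) (size_shift j Hs).
rewrite last_rcons; apply.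
rewrite mem_rcons inE negb_or eq_sym Hj /=.
by apply: contra Hi; apply: mem_behead.
Qed.

Lemma tp_mono (M M' : 'M[R]_N) : (forall a b, 0 <= M a b) -> (forall a b, M a b <= M' a b) ->
  forall a c, trans_prod M a c <= trans_prod M' a c.
Proof.
move=> H0 H1 a c; elim: c a => [|d c IH] a //=.
by rewrite ler_pM ?H0 ?tp_ge0.
Qed.

Lemma tpQ_avoid b c : b != i0 -> 0 < trans_prod Qm b c -> i0 \notin b :: c.
Proof.
elim: c b => [|d c IH] b Hb /=; first by rewrite inE eq_sym.
move=> /(pos_mul (Qm_ge0 _ _) (tp_ge0 Qm_ge0 _ _)) [h1 h2].
have Hd : d != i0.
  by apply/eqP => Hd; move: h1; rewrite mxE Hd eqxx andbF ltxx.
by rewrite inE negb_or eq_sym Hb /=; apply: IH.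
Qed.

Lemma Q_conv l m b : L = l.+1 -> b != i0 ->
  ((Qm ^+ (l + m)%N) *m one) b 0 <= N%:R * Bm m.
Proof.
move=> HL Hb.
rewrite exprD -mulmxE -mulmxA mxE.
apply: (le_trans (y := \sum_(a : sym) Bm m)); last first.
  by rewrite sumr_const card_ord mulr_natl.
apply: ler_sum => a _.
have H0 : 0 <= ((Qm ^+ m) *m one) a 0 by case/andP: (Qrow m a).
case: (ltrP 0 ((Qm ^+ l) b a)) => H.
  have [c [Hc Hl Ht]] := path_of_pow Qm_ge0 H.
  apply: (le_trans (y := 1 * ((Qm ^+ m) *m one) a 0)).
    by rewrite ler_wpM2r // Qpow_le1.
  rewrite mul1r.
  have Hs : size (b :: c) = L by rewrite /= Hc HL.
  have Hm : 0 < mu_cyl P p (b :: c).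
    rewrite /= mulr_gt0 ?p_gt0 //.
    by apply: (lt_le_trans Ht); apply: tp_mono; [apply: Qm_ge0 | apply: Qm_le_P].
  apply: (le_trans _ (Gf_le_B m Hs Hm)).
  have := Gf_ge_Q m Hs (tpQ_avoid Hb Ht); by rewrite /= Hl.
have -> : (Qm ^+ l) b a = 0 by apply/le_anti; rewrite H (pow_ge0 Qm_ge0).
by rewrite mul0r Bm_ge0.
Qed.

Fixpoint xpath (x : nat -> sym) (k l : nat) : seq sym :=
  if l is l'.+1 then x k.+1 :: xpath x k.+1 l' else [::].

Lemma size_xpath x k l : size (xpath x k l) = l.
Proof. by elim: l k => [|l IH] k //=; rewrite IH. Qed.

Lemma xpath_pos x k l : in_SigmaA A x -> 0 < trans_prod P (x k) (xpath x k l).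
Proof.
move=> Hx; elim: l k => [|l IH] k /=; first exact: ltr01.
by rewrite mulr_gt0 ?IH //; apply/HAP/Hx.
Qed.

Lemma nth_xpath x k l t : (t <= l)%N -> nth ord0 (x k :: xpath x k l) t = x (k + t)%N.
Proof.
elim: l k t => [|l IH] k t Ht.
  by move: Ht; rewrite leqn0 => /eqP ->; rewrite /= ?addn0.
case: t Ht => [|t] Ht /=; first by rewrite ?addn0.
by rewrite IH // addSnnS.
Qed.

Lemma walk e s k : size s = L -> (size e <= k)%N ->
  in_hole G (drop (size e) (s ++ e)) -> Gf k s <= 1 - trans_prod P (last ord0 s) e.
Proof.
elim: e s k => [|j e IH] s k Hs Hk Hh.
  by rewrite drop0 cats0 in Hh; rewrite Gf_bad //= subrr.
case: k Hk => // k Hk.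
case Hb: (in_hole G s).
  by rewrite Gf_bad // subr_ge0 tpP_le1.
have Hne : s != [::] by apply/eqP => Hs0; move: L_gt0; rewrite -Hs Hs0.
rewrite /= /gd Hb mul1r.
set a := last ord0 s.
have Hh' : in_hole G (drop (size e) (rcons (behead s) j ++ e)).
  by move: Hh; case: (s) Hne => // x s' _ /=; rewrite cat_rcons.
have IHj := IH _ _ (size_shift j Hs) Hk Hh'.
rewrite last_rcons in IHj.
have Hrow := P_row a; rewrite (bigD1 j) //= in Hrow.
rewrite (bigD1 j) //=.
have Hrest : \sum_(l | l != j) P a l * Gf k (rcons (behead s) l) <= \sum_(l | l != j) P a l.
  by apply: ler_sum => l _; rewrite ler_piMr ?P_ge0 ?Gf_le1.
have Hj : P a j * Gf k (rcons (behead s) j) <= P a j * (1 - trans_prod P j e).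
  by rewrite ler_wpM2l ?P_ge0.
apply: (le_trans (lerD Hj Hrest)).
by rewrite /= mulrBr mulr1 -Hrow addrAC.
Qed.

Lemma exists_escape s : size s = L -> exists k, Gf k s < 1.
Proof.
move=> Hs.
have [w Hw] : exists w, w \in G.
  by move: HGne; case: G => // w G' _; exists w; rewrite inE eqxx.
have [x [Hx [k Hk]]] := HGall Hw.
have [l HL] : exists l, L = l.+1 by exists L.-1; rewrite prednK // L_gt0.
set a := last ord0 s.
have [j Hj] := succ_exists a.
have [c1 [Hl Hc1]] := irr_path j (x k).
set e := (j :: c1) ++ xpath x k l.
exists (size e).
have Htp : 0 < trans_prod P a e.
  rewrite /e tp_cat /= Hl mulr_gt0 ?xpath_pos //.
  by rewrite mulr_gt0.
have Hdrop : drop (size e) (s ++ e) = x k :: xpath x k l.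
  rewrite /e lastI Hl cat_rcons catA drop_size_cat //.
  by rewrite !size_cat /= size_xpath Hs HL addnC.
have Hhole : in_hole G (drop (size e) (s ++ e)).
  rewrite Hdrop; apply/hasP; exists w => //.
  rewrite prefixE; apply/eqP.
  have Hsw : (size w <= l.+1)%N by rewrite -HL size_le_L.
  apply: (@eq_from_nth _ ord0).
    by rewrite size_takel //= size_xpath.
  move=> t; rewrite size_takel /= ?size_xpath // => Ht.
  rewrite nth_take // nth_xpath ?Hk //.
  by rewrite -ltnS (leq_trans Ht).
apply: (le_lt_trans (walk Hs (leqnn (size e)) Hhole)).
by rewrite ltrBlDr ltrDl.
Qed.

Lemma Bm_lt1 : exists K, Bm K < 1.
Proof.
have [f Hf] := fin_all_exists (fun t : L.-tuple sym => exists_escape (size_tuple t)).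
exists (\max_(t : L.-tuple sym) f t).
apply/bigmax_ltP; split; first exact: ltr01.
move=> t _; apply: (le_lt_trans _ (Hf t)).
by apply: Gf_anti; apply: (leq_bigmax (F := f)).
Qed.

Lemma xbound (C r : R) (y : 'rV[R]_N) (z : 'cV[R]_N) K :
  0 <= C -> 0 <= r ->
  (forall k a b, a != i0 -> (Qm ^+ k) a b <= C * r ^+ k) ->
  y 0 i0 = 0 -> (forall b, `|z b 0| <= 1) ->
  `|((y *m Qm ^+ K) *m z) 0 0| <= (\sum_a `|y 0 a|) * N%:R * C * r ^+ K.
Proof.
move=> C0 r0 HC Hy Hz.
rewrite mxE; apply: (le_trans (ler_norm_sum _ _ _)).
apply: (le_trans (y := \sum_(b : sym) (\sum_a `|y 0 a|) * (C * r ^+ K))); last first.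
  rewrite sumr_const card_ord.
  set S := \sum_a `|y 0 a|.
  have E : S * (C * r ^+ K) *+ N = S * N%:R * C * r ^+ K by rewrite -mulr_natr; ring.
  by rewrite E.
apply: ler_sum => b _.
rewrite normrM.
apply: (le_trans (y := `|(y *m Qm ^+ K) 0 b|)).
  by rewrite -[X in _ <= X]mulr1 ler_wpM2l.
rewrite mxE (le_trans (ler_norm_sum _ _ _)) // mulr_suml.
apply: ler_sum => a _; rewrite normrM.
case: (eqVneq a i0) => [->|Ha]; first by rewrite Hy normr0 !mul0r.
rewrite ler_wpM2l // ger0_norm ?(pow_ge0 Qm_ge0) //.
exact: HC.
Qed.

Lemma lemmaX theta : eigenvalue P theta -> 0 < theta -> theta != 1 ->
  forall C r, 0 <= C -> 0 <= r -> r < 1 -> r < theta ->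
  (forall k a b, a != i0 -> (Qm ^+ k) a b <= C * r ^+ k) -> False.
Proof.
move=> /eigenvalueP [v Hv vn0] th0 th1 C r C0 r0 r1 rth HC.
pose v' : 'rV[R]_N := \row_b (if b != i0 then v 0 b else 0).
pose e : 'rV[R]_N := \row_b (if b != i0 then P i0 b else 0).
pose f : 'cV[R]_N := \col_a (if a != i0 then P a i0 else 0).
pose u : 'cV[R]_N := \col_a (if a != i0 then 1 else 0).
have Ev : forall b, \sum_a v 0 a * P a b = theta * v 0 b.
  by move=> b; have := congr1 (fun M : 'rV_N => M 0 b) Hv; rewrite !mxE.
have F1 : theta *: v' = v 0 i0 *: e + v' *m Qm.
  apply/rowP => b; rewrite /v' /e !mxE.
  case: (eqVneq b i0) => [->|Hb] /=.
    rewrite !mulr0 add0r; symmetry; apply: big1 => a _.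
    by rewrite !mxE eqxx andbF mulr0.
  rewrite -Ev (bigD1 i0) //= [in RHS](bigD1 i0) //= !mxE eqxx /= mul0r add0r.
  congr (_ + _); apply: eq_bigr => a Ha; by rewrite !mxE Ha Hb.
have F2 : theta * v 0 i0 = v 0 i0 * P i0 i0 + (v' *m f) 0 0.
  rewrite /v' /f -Ev (bigD1 i0) //= mxE [in RHS](bigD1 i0) //= !mxE eqxx /= mul0r add0r.
  congr (_ + _); apply: eq_bigr => a Ha; by rewrite !mxE Ha.
have F3 : u = f + Qm *m u.
  apply/colP => a; rewrite /u /f !mxE.
  case: (eqVneq a i0) => [->|Ha] /=.
    rewrite add0r; symmetry; apply: big1 => b _.
    by rewrite !mxE eqxx /= mul0r.
  transitivity (\sum_j P a j); first by rewrite P_row.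
  rewrite (bigD1 i0) //= [in RHS](bigD1 i0) //= !mxE eqxx /= andbF mul0r add0r.
  congr (_ + _); apply: eq_bigr => b Hb; by rewrite !mxE Ha Hb mulr1.
have F4 : 1 = P i0 i0 + (e *m u) 0 0.
  transitivity (\sum_j P i0 j); first by rewrite P_row.
  rewrite /e /u (bigD1 i0) //= mxE [in RHS](bigD1 i0) //= !mxE eqxx /= mul0r add0r.
  congr (_ + _); apply: eq_bigr => b Hb; by rewrite !mxE Hb mulr1.
have QS : forall K, Qm *m Qm ^+ K = Qm ^+ K.+1 by move=> K; rewrite exprS mulmxE.
have QSr : forall K, Qm ^+ K *m Qm = Qm ^+ K.+1 by move=> K; rewrite exprSr mulmxE.
pose x K := ((v' *m Qm ^+ K) *m f) 0 0.
pose g K := ((e *m Qm ^+ K) *m f) 0 0.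
pose h K := ((e *m Qm ^+ K) *m u) 0 0.
have R1 : forall K, theta * x K = v 0 i0 * g K + x K.+1.
  move=> K; have := congr1 (fun M : 'rV_N => ((M *m Qm ^+ K) *m f) 0 0) F1.
  rewrite /= -!scalemxAl mxE => ->.
  by rewrite !mulmxDl mxE -!scalemxAl mxE -(mulmxA v') QS.
have R2 : forall K, h K = g K + h K.+1.
  move=> K; rewrite /h /g.
  have -> : e *m Qm ^+ K *m u = e *m Qm ^+ K *m f + e *m Qm ^+ K.+1 *m u.
    by rewrite {1}F3 mulmxDr -QSr !mulmxA.
  by rewrite mxE.
have R3 : theta * v 0 i0 = v 0 i0 * P i0 i0 + x 0.
  by rewrite /x expr0 mulmx1.
have R4 : 1 = P i0 i0 + h 0.
  by rewrite /h expr0 mulmx1.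
have Qp0 : forall K a b, 0 <= (Qm ^+ K) a b := pow_ge0 Qm_ge0.
have e0 : forall a b, 0 <= e a b by move=> a b; rewrite mxE; case: ifP; rewrite ?P_ge0.
have f0 : forall a b, 0 <= f a b by move=> a b; rewrite mxE; case: ifP; rewrite ?P_ge0.
have u0 : forall a b, 0 <= u a b by move=> a b; rewrite mxE; case: ifP; rewrite ?ler01.
have g0 : forall K, 0 <= g K.
  by move=> K; apply: mul_nonneg => //; apply: mul_nonneg.
have h0 : forall K, 0 <= h K.
  by move=> K; apply: mul_nonneg => //; apply: mul_nonneg.
pose Sv := \sum_a `|v' 0 a|.
pose Se := \sum_a `|e 0 a|.
have Sv0 : 0 <= Sv by apply: sumr_ge0 => a _.
have Se0 : 0 <= Se by apply: sumr_ge0 => a _.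
have xB : forall K, `|x K| <= Sv * N%:R * C * r ^+ K.
  move=> K; apply: xbound => //; first by rewrite mxE eqxx.
  by move=> b; rewrite mxE; case: ifP; rewrite ?normr0 ?ler01 // ger0_norm ?P_ge0 ?P_le1.
have hB : forall K, h K <= Se * N%:R * C * r ^+ K.
  move=> K; rewrite -[h K]ger0_norm //; apply: xbound => //; first by rewrite mxE eqxx.
  by move=> b; rewrite mxE; case: ifP; rewrite ?normr0 ?ler01 // normr1.
pose q := Num.max r (r / theta).
have q0 : 0 <= q by rewrite le_max r0.
have q1 : q < 1 by rewrite gt_max r1 ltr_pdivrMr // mul1r.
have rq : forall K, r ^+ K <= q ^+ K.
  by move=> K; apply: lerXn2r; rewrite ?nnegrE // le_max lexx.
have rtq : forall K, (r / theta) ^+ K <= q ^+ K.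
  move=> K; apply: lerXn2r; rewrite ?nnegrE ?divr_ge0 ?(ltW th0) //.
  by rewrite le_max lexx orbT.
case: (eqVneq (v 0 i0) 0) => Hvi.
  have Fv : theta *: v' = v' *m Qm by rewrite F1 Hvi scale0r add0r.
  have Fk : forall K, theta ^+ K *: v' = v' *m Qm ^+ K.
    elim=> [|K IH]; first by rewrite expr0 scale1r mulmx1.
    by rewrite exprSr -scalerA Fv scalemxAl IH -mulmxA QSr.
  suff : v = 0 by move/eqP; rewrite (negbTE vn0).
  apply/rowP => b; rewrite mxE.
  case: (eqVneq b i0) => [->//|Hb].
  have vb : v 0 b = v' 0 b by rewrite mxE Hb.
  rewrite vb; apply/eqP; rewrite -normr_le0.
  pose z : 'cV[R]_N := \col_a (a == b)%:R.
  apply: (geo0 (q := r / theta) (M := Sv * N%:R * C)).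
  - by rewrite divr_ge0 ?(ltW th0).
  - by rewrite ltr_pdivrMr // mul1r.
  move=> K.
  have : `|((v' *m Qm ^+ K) *m z) 0 0| <= Sv * N%:R * C * r ^+ K.
    apply: xbound => //; first by rewrite mxE eqxx.
    by move=> a; rewrite mxE; case: eqP; rewrite ?normr0 ?normr1 ?ler01.
  have -> : ((v' *m Qm ^+ K) *m z) 0 0 = theta ^+ K * v' 0 b.
    rewrite -Fk mxE (bigD1 b) //= big1 ?addr0.
      by rewrite !mxE eqxx mulr1.
    by move=> a Ha; rewrite !mxE (negbTE Ha) mulr0.
  have tK : 0 < theta ^+ K by rewrite exprn_gt0.
  rewrite normrM (ger0_norm (ltW tK)) => H.
  by rewrite expr_div_n mulrA ler_pdivlMr // mulrC.
have vi0 : 0 < `|v 0 i0| by rewrite normr_gt0.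
pose xs K := x K / v 0 i0.
have R1' : forall K, theta * xs K = g K + xs K.+1.
  by move=> K; rewrite /xs mulrA R1 mulrDl mulrAC divff // mul1r.
have R3' : xs 0 = theta - P i0 i0.
  rewrite /xs; apply: (mulIf Hvi); rewrite divfK //; lra.
pose Mx := Sv * N%:R * C / `|v 0 i0|.
pose Mh := Se * N%:R * C.
have Mx0 : 0 <= Mx by rewrite /Mx divr_ge0 ?mulr_ge0 ?ler0n.
have Mh0 : 0 <= Mh by rewrite /Mh mulr_ge0 ?mulr_ge0 ?ler0n.
have xsB : forall K, `|xs K| <= Mx * r ^+ K.
  move=> K; rewrite /xs normrM normfV /Mx mulrAC ler_wpM2r ?invr_ge0 ?normr_ge0 //.
have hq : forall K, h K <= Mh * q ^+ K.
  move=> K; apply: (le_trans (hB K)); rewrite ler_wpM2l //.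
have divq : forall K, Mx * (r ^+ K / theta ^+ K) <= Mx * q ^+ K.
  by move=> K; rewrite -expr_div_n ler_wpM2l.
have key : forall K, `|theta - 1| <= (Mh + Mx) * q ^+ K.
  move=> K; have tK : 0 < theta ^+ K by rewrite exprn_gt0.
  have xsl := xsB K; have xsl' := ler_norm (xs K).
  have xsl'' : - xs K <= `|xs K| by rewrite -normrN ler_norm.
  case: (ltrgtP theta 1) => Ht1.
  - have claim : forall K, theta ^+ K * (h 0 - h K) <= theta ^+ K * xs 0 - xs K.
      elim=> [|k IH]; first by rewrite expr0 !mul1r !subrr.
      have tk1 : theta ^+ k.+1 <= 1 by rewrite exprn_ile1 // ltW.
      have P1 := ler_wpM2l (ltW th0) IH.
      have P2 : theta ^+ k.+1 * g k <= g k by rewrite ler_piMl.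
      move: P2; rewrite !exprS => P2.
      have R2' := congr1 (fun y => theta * theta ^+ k * y) (R2 k).
      have := R1' k; move: R2' => /= R2'; lra.
    have C1 := claim K; rewrite R3' in C1.
    have A1 : (1 - theta) * theta ^+ K <= h K * theta ^+ K + Mx * r ^+ K.
      have R4' := congr1 (fun y => theta ^+ K * y) R4; move: R4' => /= R4'; lra.
    have A2 : 1 - theta <= h K + Mx * (r ^+ K / theta ^+ K).
      by rewrite mulrA -[h K](mulfK (lt0r_neq0 tK)) -mulrDl ler_pdivlMr.
    apply: (le_trans A2); rewrite mulrDl; apply: lerD => //.
  - have claim : forall K, theta ^+ K * xs 0 - xs K <= theta ^+ K * (h 0 - h K).
      elim=> [|k IH]; first by rewrite expr0 !mul1r !subrr.
      have tk1 : 1 <= theta ^+ k.+1 by rewrite exprn_ege1 // ltW.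
      have P1 := ler_wpM2l (ltW th0) IH.
      have P2 : g k <= theta ^+ k.+1 * g k by rewrite ler_peMl.
      move: P2; rewrite !exprS => P2.
      have R2' := congr1 (fun y => theta * theta ^+ k * y) (R2 k).
      have := R1' k; move: R2' => /= R2'; lra.
    have C1 := claim K; rewrite R3' in C1.
    have hK0 : 0 <= h K * theta ^+ K by rewrite mulr_ge0 // ltW.
    have A1 : (theta - 1) * theta ^+ K <= Mx * r ^+ K.
      have R4' := congr1 (fun y => theta ^+ K * y) R4; move: R4' => /= R4'; lra.
    have A2 : theta - 1 <= Mx * (r ^+ K / theta ^+ K).
      by rewrite mulrA ler_pdivlMr.
    apply: (le_trans A2); rewrite mulrDl; apply: (le_trans (divq K)).
    by rewrite lerDr mulr_ge0 // exprn_ge0.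
  - by move: th1; rewrite Ht1 eqxx.
have := geo0 q0 q1 key; rewrite normr_le0 subr_eq0.
by rewrite (negbTE th1).
Qed.

Lemma lemmaY theta : eigenvalue P theta -> 0 < theta -> theta != 1 ->
  forall C r, 0 <= C -> 0 < r -> r < 1 -> r < theta ->
  (forall m, Bm m <= C * r ^+ m) -> False.
Proof.
move=> He th0 th1 C r C0 r0 r1 rth HB.
have [l HL] : exists l, L = l.+1 by exists L.-1; rewrite prednK // L_gt0.
pose C' := (N%:R * C + 1) / r ^+ l.
have rl : 0 < r ^+ l by rewrite exprn_gt0.
apply: (lemmaX He th0 th1 (C := C') (r := r)) => //.
- by rewrite divr_ge0 ?addr_ge0 ?mulr_ge0 ?ler0n ?ler01 // ltW.
- exact: ltW.
move=> k a b Ha.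
case: (leqP l k) => Hk.
  rewrite -(subnKC Hk).
  apply: (le_trans (Qpow_le_row _ _ _)).
  apply: (le_trans (Q_conv (k - l)%N HL Ha)).
  set m := (k - l)%N.
  apply: (le_trans (ler_wpM2l (ler0n _ _) (HB m))).
  have -> : C' * r ^+ (l + m) = (N%:R * C + 1) * r ^+ m.
    by rewrite /C' exprD mulrA divfK // lt0r_neq0.
  have : 0 <= r ^+ m by rewrite exprn_ge0 // ltW.
  lra.
apply: (le_trans (Qpow_le1 _ _ _)).
rewrite /C' mulrAC ler_pdivlMr // mul1r.
apply: (le_trans (y := r ^+ k)).
  by apply: (ler_wiXn2l (ltW r0) (ltW r1)); exact: ltnW.
have rk : 0 <= r ^+ k by rewrite exprn_ge0 // ltW.
rewrite ler_peMl //.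
by rewrite lerDr mulr_ge0 ?ler0n.
Qed.

Lemma main_result theta : eigenvalue P theta -> 0 < theta -> theta != 1 ->
  exists rho : R,
    (fun m : nat => - (ln (mu_W P p G m) / m%:R)) @ \oo --> rho /\
    0 < rho /\ rho <= - ln theta.
Proof.
move=> He th0 th1.
have Bpos : forall m, 0 < Bm m.
  move=> m0; rewrite lt_def Bm_ge0 andbT; apply/negP => /eqP Hz.
  have Hz' : forall t, Bm (m0 + t)%N = 0.
    case=> [|t]; first by rewrite addn0.
    apply/le_anti; rewrite Bm_ge0 andbT addnS -addSn.
    by apply: (le_trans (Bm_submult _ _)); rewrite Hz mul0r.
  pose r := Num.min theta 1 / 2.
  have m0' : 0 < Num.min theta 1 by rewrite lt_min th0 ltr01.
  have r0 : 0 < r by rewrite divr_gt0.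
  have rm : r < Num.min theta 1 by rewrite ltr_pdivrMr // ltr_pMr // ltr1n.
  have r1 : r < 1 by apply: (lt_le_trans rm); rewrite ge_min lexx orbT.
  have rth : r < theta by apply: (lt_le_trans rm); rewrite ge_min lexx.
  apply: (lemmaY He th0 th1 (C := (r ^+ m0)^-1) (r := r)) => //.
    by rewrite invr_ge0 exprn_ge0 // ltW.
  move=> m; case: (leqP m0 m) => Hm.
    by rewrite -(subnKC Hm) Hz' mulr_ge0 ?invr_ge0 ?exprn_ge0 // ltW.
  apply: (le_trans (Bm_le1 m)).
  rewrite mulrC ler_pdivlMr ?exprn_gt0 // mul1r.
  by apply: (ler_wiXn2l (ltW r0) (ltW r1)); exact: ltnW.
pose w m := - ln (Bm m).
have wge0 : forall m, 0 <= w m by move=> m; rewrite oppr_ge0 ln_le0 ?Bm_le1.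
have Bexp : forall m, Bm m = expR (- w m) by move=> m; rewrite opprK lnK // posrE.
have wsup : forall m k, w m + w k <= w (m.+1 + k)%N.
  move=> m k; rewrite /w -opprD lerN2 -lnM ?posrE ?Bpos //.
  by rewrite ler_ln ?posrE ?mulr_gt0 ?Bpos // Bm_submult.
have witer : forall n0 q t, q%:R * w n0 <= w (q * n0.+1 + t)%N.
  move=> n0; elim=> [|q IH] t; first by rewrite mul0r wge0.
  rewrite mulSn -addnA.
  apply: (le_trans _ (wsup _ _)).
  by rewrite -[q.+1]add1n natrD mulrDl mul1r lerD2l IH.
have wlow : forall n0 m, ((m.+1)%:R / (n0.+1)%:R - 1) * w n0 <= w m.
  move=> n0 m.
  rewrite [in w m](divn_eq m n0.+1).
  apply: (le_trans _ (witer _ _ _)).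
  rewrite ler_wpM2r // lerBlDr ler_pdivrMr // natr1 -natrM ler_nat.
  rewrite mulSn addnC {1}(divn_eq m n0.+1) -addnS leq_add2l.
  exact: ltn_pmod.
have bound : forall n0, w n0 / (n0.+1)%:R <= Num.max (- ln theta) 0.
  move=> n0; rewrite leNgt; apply/negP; rewrite gt_max => /andP [H1 H2].
  set al := w n0 / (n0.+1)%:R in H1 H2.
  pose r := expR (- al).
  have r0 : 0 < r by apply: expR_gt0.
  have r1 : r < 1 by rewrite expR_lt1 oppr_lt0.
  have thE : expR (ln theta) = theta by rewrite lnK // posrE.
  have rth : r < theta by rewrite -thE ltr_expR ltrNl.
  apply: (lemmaY He th0 th1 (C := expR (w n0)) (r := r)) => //.
  move=> m; rewrite Bexp /r -expRM_natl -expRD ler_expR.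
  have W := wlow n0 m.
  have E : (m.+1)%:R / (n0.+1)%:R * w n0 = (m.+1)%:R * al.
    by rewrite /al mulrAC -mulrA.
  rewrite mulrBl mul1r E -natr1 in W.
  lra.
pose Es := [set w k / (k.+1)%:R | k in [set: nat]].
have En : Es !=set0 by exists (w 0%N / 1%:R); exists 0%N.
have Eub : ubound Es (Num.max (- ln theta) 0) by move=> y [k _ <-]; apply: bound.
have Ehub : has_ubound Es by exists (Num.max (- ln theta) 0).
pose sig := sup Es.
have le_sig : forall k, w k / (k.+1)%:R <= sig.
  by move=> k; apply: ub_le_sup => //; exists k.
have sig_le : sig <= Num.max (- ln theta) 0 by apply: ge_sup.
have sig0 : 0 < sig.
  have [K HK] := Bm_lt1.
  have wK : 0 < w K by rewrite /w oppr_gt0 ln_lt0 // Bpos HK.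
  by apply: (lt_le_trans _ (le_sig K)); rewrite divr_gt0.
have sig_th : sig <= - ln theta.
  move: sig_le; rewrite le_max => /orP [] // H.
  by move: sig0; rewrite ltNge H.
exists sig; split; last by split.
have [c [c0 Hc]] := muW_ge_B.
pose ka := `|ln c|.
have ka1 : - ka <= ln c by rewrite lerNl /ka -normrN ler_norm.
apply/cvgrPdist_le => eps eps0.
have e20 : 0 < eps / 2 by rewrite divr_gt0.
have [al [n0 _ Eal] Hal] := sup_adherent e20 (conj En Ehub).
pose N := maxn (Num.trunc (2 * w n0 / eps + 1)).+1 (Num.trunc ((sig + ka) / eps)).+1.
exists N => //; move=> m /= Hm.
have HN1 : ((Num.trunc (2 * w n0 / eps + 1)).+1 <= m)%N.
  by apply: leq_trans Hm; apply: leq_maxl.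
have HN2 : ((Num.trunc ((sig + ka) / eps)).+1 <= m)%N.
  by apply: leq_trans Hm; apply: leq_maxr.
have HM1 : 2 * w n0 / eps + 1 < m%:R.
  apply: (lt_le_trans (truncnS_gt _)); by rewrite ler_nat.
have HM2 : (sig + ka) / eps < m%:R.
  apply: (lt_le_trans (truncnS_gt _)); by rewrite ler_nat.
have m0 : (0 < m)%N by apply: leq_trans HN1.
set M := m%:R.
have M0 : 0 < M by rewrite ltr0n.
set a := mu_W P p G m.
have cB : 0 < c * Bm m by rewrite mulr_gt0.
have a0 : 0 < a by apply: (lt_le_trans cB); apply: Hc.
have la_up : ln a <= - w m.
  by rewrite opprK ler_ln ?posrE ?Bpos // muW_le_B.
have la_low : ln c - w m <= ln a.
  by rewrite opprK -lnM ?posrE ?Bpos // ler_ln ?posrE // Hc.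
have wm_up : w m <= sig * (M + 1).
  by have := le_sig m; rewrite ler_pdivrMr ?ltr0n // -natr1.
have wm_low := wlow n0 m.
have E : (m.+1)%:R / (n0.+1)%:R * w n0 = (M + 1) * al.
  by rewrite -Eal mulrAC -mulrA /M natr1.
rewrite mulrBl mul1r E in wm_low.
have P1 : (M + 1) * (sig - eps / 2) <= (M + 1) * al.
  by rewrite ler_wpM2l ?addr_ge0 ?ler01 ?(ltW M0) // ltW // ltrBlDr -ltrBlDl.
rewrite ltr_pdivrMr // in HM2.
rewrite -(ltr_pM2r eps0) mulrDl divfK ?lt0r_neq0 // mul1r in HM1.
have Ey : ln a = ln a / M * M by rewrite divfK // lt0r_neq0.
set y := ln a / M in Ey *.
rewrite opprK ler_norml; apply/andP; split.
  rewrite -(ler_pM2r M0); lra.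
rewrite -(ler_pM2r M0); lra.
Qed.

End Main.

Theorem corollary3p5 (R : realType) (n : nat)
  (A P : 'M[R]_n.+1) (p : 'rV[R]_n.+1)
  (HA01 : zero_one_mx A) (HAirr : irreducible_mx A)
  (HP : row_stochastic P) (HAP : compatible A P) (Hp : stationary P p)
  (theta : R)
  (Htheta_eig : eigenvalue P theta) (Htheta_pos : 0 < theta) (Htheta_ne1 : theta != 1)
  (Htheta_max : forall lambda : R, eigenvalue P lambda -> 0 < lambda -> lambda != 1 ->
                  lambda <= theta)
  (G : seq (seq 'I_n.+1))
  (HGne : G != [::])
  (HGall : forall w, w \in G -> allowed A w)
  (HGsym : exists i : 'I_n.+1, forall w, w \in G -> i \in w) :
  exists rho : R,
    (fun m : nat => - (ln (mu_W P p G m) / m%:R)) @ \oo --> rho /\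
    0 < rho /\ rho <= - ln theta.
Proof.
have [i Hi] := HGsym.
exact: (main_result (i0 := i)).
Qed.
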